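(* There is a PCR/$\mathbb{Q}$ refutation of $Q_n$ of degree $2$ and monomial-size polynomial in $n$.
   Context: For each $i\in[n]$ and $j\in[2n]$ there is a pair of twin variables $x_{ij},\bar x_{ij}$. Let $\mathrm{ks}_i=\sum_{j\in[2n]}x_{ij}-n$. $Q_n$ is the set of constraints: (I) $\mathrm{ks}_1=1/2$; (II) $\mathrm{ks}_i^2=\mathrm{ks}_{i+1}$ for each $i\in[n-1]$; (III) $\mathrm{ks}_n^2=0$ (each written as polynomial $=0$). A PCR/$\mathbb{Q}$ proof of $p=0$ from $Q$ is a sequence $p_1,\dots,p_\ell=p$ where each $p_i$ is an element of $Q$, a logical axiom $x^2-x$ or $x+\bar x-1$ for a twin pair, a product $xp_j$ of an earlier $p_j$ with a variable $x$, or a combination $ap_j+bp_k$ of earlier lines with $a,b\in\mathbb{Q}$. A refutation is a proof of $1=0$. Its degree is the max degree of the $p_i$, and its monomial-size is the total number of monomials (with multiplicity) over all $p_i$. *)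

(* Defs.v *)
From HB Require Import structures.
From mathcomp Require Import all_boot all_order all_algebra.
From mathcomp Require Import mpoly.
Set Implicit Arguments. Unset Strict Implicit. Unset Printing Implicit Defensive.
Import Order.TTheory GRing.Theory Num.Theory.
Local Open Scope ring_scope.

(* Variables: (i, j, b) with i : [n] (0-indexed), j : [2n] (0-indexed);
   b = true is x_{ij}, b = false is its twin \bar x_{ij}. *)
Definition var_t (n : nat) : finType := ('I_n * 'I_(2 * n) * bool)%type.

Definition poly_t (n : nat) := {mpoly rat[#|var_t n|]}.

Definition X (n : nat) (v : var_t n) : poly_t n := 'X_(enum_rank v).

Definition ks (n : nat) (i : 'I_n) : poly_t n :=
  \sum_(j < 2 * n) X ((i, j, true) : var_t n) - (n%:R : rat)%:MP.

(* The constraint set Q_n, each constraint written as polynomial = 0. *)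
Definition inQ (n : nat) (p : poly_t n) : Prop :=
  (exists i : 'I_n, val i = 0%N /\ p = ks i - (1 / 2 : rat)%:MP)
  \/ (exists i i' : 'I_n, val i' = (val i).+1 /\ p = ks i ^+ 2 - ks i')
  \/ (exists i : 'I_n, val i = n.-1 /\ p = ks i ^+ 2).

Definition log_axiom (n : nat) (p : poly_t n) : Prop :=
  (exists v : var_t n, p = X v ^+ 2 - X v)
  \/ (exists (i : 'I_n) (j : 'I_(2 * n)),
        p = X ((i, j, true) : var_t n) + X ((i, j, false) : var_t n) - 1).

Definition line_ok (n : nat) (prev : seq (poly_t n)) (p : poly_t n) : Prop :=
  inQ p \/ log_axiom p
  \/ (exists (j : nat) (v : var_t n), (j < size prev)%N /\ p = X v * nth 0 prev j)
  \/ (exists (j k : nat) (a b : rat), (j < size prev)%N /\ (k < size prev)%N /\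
        p = a *: nth 0 prev j + b *: nth 0 prev k).

Definition pcr_proof (n : nat) (s : seq (poly_t n)) : Prop :=
  forall k : nat, (k < size s)%N -> line_ok (take k s) (nth 0 s k).

(* A refutation: a proof whose last line is 1 (i.e. proves 1 = 0). *)
Definition pcr_refutation (n : nat) (s : seq (poly_t n)) : Prop :=
  pcr_proof s /\ s != [::] /\ last 0 s = 1.

(* Degree of a proof: max total degree of its lines (msize p = 1 + deg p, 0 for p = 0). *)
Definition pcr_degree_le (n : nat) (d : nat) (s : seq (poly_t n)) : Prop :=
  all (fun p : poly_t n => (msize p <= d.+1)%N) s.

Definition monomial_size (n : nat) (s : seq (poly_t n)) : nat :=
  \sum_(p <- s) size (msupp p).

(* Main.v *)
Require Import Defs.
From HB Require Import structures.
From mathcomp Require Import all_boot all_order all_algebra.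
From mathcomp Require Import mpoly.
From mathcomp Require Import ring zify.
Set Implicit Arguments. Unset Strict Implicit. Unset Printing Implicit Defensive.
Import Order.TTheory GRing.Theory Num.Theory.
Local Open Scope ring_scope.

Section Frame.
Variable n : nat.
Local Notation P := (poly_t n).

Definition line_okm (prev : seq P) (p : P) : Prop :=
  inQ p \/ log_axiom p
  \/ (exists (q : P) (v : var_t n), q \in prev /\ p = X v * q)
  \/ (exists (q r : P) (a b : rat), q \in prev /\ r \in prev /\
        p = a *: q + b *: r).

Lemma line_okmP prev p : line_okm prev p -> line_ok prev p.
Proof.
case=> [h|[h|[[q [v [hq ->]]]|[q [r [a [b [hq [hr ->]]]]]]]]].
- by left.
- by right; left.
- right; right; left; exists (index q prev), v; split; first by rewrite index_mem.
  by rewrite nth_index.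
- right; right; right; exists (index q prev), (index r prev), a, b.
  by rewrite !index_mem !nth_index.
Qed.

Definition Valid (s : seq P) := pcr_proof s /\ pcr_degree_le 2 s.

Lemma valid_nil : Valid [::].
Proof. by split. Qed.

Lemma valid_rcons s p : Valid s -> line_okm s p -> (msize p <= 3)%N -> Valid (rcons s p).
Proof.
move=> [hs hd] hl hp; split.
  move=> k; rewrite size_rcons ltnS leq_eqVlt => /orP [/eqP ->|hk].
    by rewrite nth_rcons ltnn eqxx -cats1 take_size_cat //; apply: line_okmP.
  rewrite nth_rcons hk -cats1 takel_cat; last exact: ltnW.
  exact: hs.
by rewrite /pcr_degree_le all_rcons hp.
Qed.

Definition Ext (s s' : seq P) := Valid s' /\ {subset s <= s'}.
Lemma msize_X (v : var_t n) : msize (X v) = 2%N.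
Proof. by rewrite /X msizeX mdeg1. Qed.

Lemma msize_mul2 (p q : P) : (msize p <= 2)%N -> (msize q <= 2)%N -> (msize (p * q) <= 3)%N.
Proof.
have [->|pn] := eqVneq p 0; first by rewrite mul0r msize0.
have [->|qn] := eqVneq q 0; first by rewrite mulr0 msize0.
move=> h1 h2; rewrite msizeM //; move: h1 h2; case: (msize p) => [|[|[|]]] //; by case: (msize q) => [|[|[|]]].
Qed.

Lemma msize_C (c : rat) : (msize (c%:MP : P) <= 1)%N.
Proof. by rewrite msizeC; case: (c != 0). Qed.

Lemma msize_ks (i : 'I_n) : (msize (ks i) <= 2)%N.
Proof.
rewrite /ks; apply: leq_trans (msizeD_le _ _) _; rewrite geq_max msizeN.
rewrite (leq_trans (msize_C _)) // andbT.
apply: leq_trans (msize_sum _ _ _) _; apply/bigmax_leqP => j _.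
by rewrite msize_X.
Qed.

Lemma msize_L (i : 'I_n) c : (msize (ks i - c%:MP) <= 2)%N.
Proof.
apply: leq_trans (msizeD_le _ _) _; rewrite geq_max msizeN msize_ks.
exact: leq_trans (msize_C _) _.
Qed.

Lemma msize_comb (a b : rat) (p q : P) : (msize p <= 3)%N -> (msize q <= 3)%N ->
  (msize (a *: p + b *: q) <= 3)%N.
Proof.
move=> hp hq; apply: leq_trans (msizeD_le _ _) _; rewrite geq_max.
by rewrite (leq_trans (msizeZ_le _ _)) // (leq_trans (msizeZ_le _ _)).
Qed.

Lemma ext_trans s1 s2 s3 : Ext s1 s2 -> Ext s2 s3 -> Ext s1 s3.
Proof. by move=> [_ h12] [v h23]; split => // x /h12 /h23. Qed.

Lemma ext_rcons s p : Valid s -> line_okm s p -> (msize p <= 3)%N -> Ext s (rcons s p).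
Proof.
by move=> v l m; split; [exact: valid_rcons | move=> x hx; rewrite mem_rcons inE hx orbT].
Qed.

Lemma in_rcons (s : seq P) p : p \in rcons s p.
Proof. by rewrite mem_rcons inE eqxx. Qed.

Lemma sumlines (L : P) (i : 'I_n) (r : seq 'I_(2*n)) : forall s (acc : P),
 Valid s -> L \in s -> acc \in s -> (msize L <= 2)%N -> (msize acc <= 3)%N ->
 exists s', Ext s s' /\ size s' = (size s + 2 * size r)%N /\
   acc + \sum_(j <- r) X ((i, j, true) : var_t n) * L \in s'.
Proof.
elim: r => [|j r IH] s acc vs Ls accs mL macc.
  by exists s; split; [split => // | rewrite big_nil addr0 addn0].
set a := X ((i, j, true) : var_t n) * L.
have ma : (msize a <= 3)%N by apply: msize_mul2 => //; rewrite msize_X.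
have e1 : Ext s (rcons s a).
  by apply: ext_rcons => //; right; right; left; exists L, (i, j, true).
have e2 : Ext (rcons s a) (rcons (rcons s a) (acc + a)).
  apply: ext_rcons; first by case: e1.
    right; right; right; exists acc, a, 1, 1; rewrite !scale1r; split; last split => //.
      by case: e1 => _; apply.
    exact: in_rcons.
  by apply: leq_trans (msizeD_le _ _) _; rewrite geq_max macc ma.
have mA : (msize (acc + a) <= 3)%N by apply: leq_trans (msizeD_le _ _) _; rewrite geq_max macc ma.
have [s' [e3 [sz h]]] := IH (rcons (rcons s a) (acc + a)) (acc + a) (proj1 e2)
   (proj2 e2 _ (proj2 e1 _ Ls)) (in_rcons _ _) mL mA.
exists s'; split; first exact: ext_trans (ext_trans e1 e2) e3.
split; first by rewrite sz !size_rcons /=; lia.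
by rewrite big_cons addrA.
Qed.

Lemma valid_msize s p : Valid s -> p \in s -> (msize p <= 3)%N.
Proof. by move=> [_ /allP h] /h. Qed.

Lemma size_ie : size (index_enum 'I_(2 * n)) = (2 * n)%N.
Proof. by rewrite [index_enum _]unlock -enumT -cardE card_ord. Qed.

Lemma halfstep s (i : 'I_n) (c : rat) : Valid s -> ks i - c%:MP \in s ->
 exists s', Ext s s' /\ (size s' <= size s + 4 * n + 2)%N /\ ks i ^+ 2 - (c ^+ 2)%:MP \in s'.
Proof.
move=> vs Ls; set L := ks i - c%:MP.
have mL : (msize L <= 2)%N by apply: msize_L.
set acc0 := (- (n%:R : rat)) *: L + 0 *: L.
have e1 : Ext s (rcons s acc0).
  apply: ext_rcons => //; first by right; right; right; exists L, L, (- (n%:R : rat)), 0.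
  by apply: msize_comb; apply: leq_trans mL _.
have [s2 [e2 [sz2 h2]]] := @sumlines L i (index_enum 'I_(2 * n)) (rcons s acc0) acc0
  (proj1 e1) (proj2 e1 _ Ls) (in_rcons _ _) mL
  (msize_comb _ _ (leq_trans mL (leqnSn _)) (leq_trans mL (leqnSn _))).
set F := acc0 + _ in h2.
have e3 : Ext s2 (rcons s2 (1 *: F + c *: L)).
  apply: ext_rcons; first by case: e2.
    by right; right; right; exists F, L, 1, c; split => //; split => //; apply: (proj2 e2); apply: (proj2 e1).
  apply: msize_comb; first by apply: (valid_msize (proj1 e2)).
  exact: leq_trans mL _.
exists (rcons s2 (1 *: F + c *: L)); split; first exact: ext_trans (ext_trans e1 e2) e3.
split; first by rewrite size_rcons sz2 size_rcons size_ie; lia.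
suff -> : ks i ^+ 2 - (c ^+ 2)%:MP = 1 *: F + c *: L by apply: in_rcons.
rewrite /F /acc0 /L /ks -mulr_suml.
rewrite -!mul_mpolyC mpolyCN mpolyC1 mpolyC0 expr2 mpolyCM.
ring.
Qed.

Definition cc (k : nat) : rat := iter k (fun x => x ^+ 2) (1 / 2).

Lemma cc_neq0 k : cc k != 0.
Proof. by elim: k => [|k IH] //=; rewrite expf_neq0. Qed.

Lemma loop k : (k < n)%N -> exists s, Valid s /\ (size s <= 1 + k * (4 * n + 4))%N /\
  exists i : 'I_n, val i = k /\ ks i - (cc k)%:MP \in s.
Proof.
elim: k => [|k IH] hk.
  exists (rcons [::] (ks (Ordinal hk) - (1 / 2 : rat)%:MP)); split.
    apply: valid_rcons; first exact: valid_nil.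
      by left; left; exists (Ordinal hk).
    exact: leq_trans (msize_L _ _) _.
  by split => //; exists (Ordinal hk); split => //; apply: in_rcons.
have [s [vs [sz [i [hi Li]]]]] := IH (ltnW hk).
have [s2 [e2 [sz2 h2]]] := halfstep vs Li.
set H := ks i ^+ 2 - ks (Ordinal hk).
have e3 : Ext s2 (rcons s2 H).
  apply: ext_rcons; first by case: e2.
    by left; right; left; exists i, (Ordinal hk); rewrite hi.
  by apply: leq_trans (msizeD_le _ _) _; rewrite geq_max msizeN expr2 msize_mul2 ?msize_ks //= (leq_trans (msize_ks _)).
set G := ks i ^+ 2 - (cc k ^+ 2)%:MP in h2.
have e4 : Ext (rcons s2 H) (rcons (rcons s2 H) (1 *: G + (-1) *: H)).
  apply: ext_rcons; first by case: e3.
    right; right; right; exists G, H, 1, (-1); split; first by apply: (proj2 e3).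
    by split => //; apply: in_rcons.
  by apply: msize_comb; apply: (valid_msize (proj1 e3)); [apply: (proj2 e3)| apply: in_rcons].
exists (rcons (rcons s2 H) (1 *: G + (-1) *: H)); split; first by case: e4.
split; first by rewrite !size_rcons; lia.
exists (Ordinal hk); split => //.
suff -> : ks (Ordinal hk) - (cc k.+1)%:MP = 1 *: G + (-1) *: H by apply: in_rcons.
rewrite /G /H scale1r scaleN1r /=.
ring.
Qed.
End Frame.
Section Count.
Variable N : nat.
Definition oU (o : option 'I_N) : 'X_{1..N} := if o is Some i then U_(i)%MM else 0%MM.
Definition gm (ab : option 'I_N * option 'I_N) : 'X_{1..N} := (oU ab.1 + oU ab.2)%MM.

Lemma mdeg_small (m : 'X_{1..N}) : (mdeg m <= 2)%N -> exists ab, m = gm ab.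
Proof.
move=> h.
have [|nz] := boolP (mdeg m == 0%N).
  by rewrite mdeg_eq0 => /eqP ->; exists (None, None); rewrite /gm /= addm0.
have deg1 : forall m' : 'X_{1..N}, mdeg m' = 1%N -> exists i, m' = U_(i)%MM.
  by move=> m' /eqP /mdeg1P [i /eqP ->]; exists i.
have [i hi] : exists i, (0 < m i)%N.
  apply/existsP; apply: contraNT nz => /existsPn H.
  rewrite mdegE big1 // => j _; by move: (H j); rewrite lt0n negbK => /eqP.
have le : (U_(i) <= m)%MM.
  by apply/mnm_lepP => j; rewrite mnm1E; case: eqP => // <-.
have [d1|d2] : mdeg m = 1%N \/ mdeg m = 2%N.
  by move: h nz; case: (mdeg m) => [|[|[|]]] //; auto.
  by have [j ->] := deg1 _ d1; exists (Some j, None); rewrite /gm /= addm0.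
have : mdeg (m - U_(i))%MM = 1%N.
  by move: d2; rewrite -{1}(submK le) mdegD mdeg1 addn1 => -[].
move/deg1 => [j hj]; exists (Some j, Some i); rewrite /gm /= -hj submK //.
Qed.

Lemma msupp_small (p : {mpoly rat[N]}) : (msize p <= 3)%N -> (size (msupp p) <= N.+1 * N.+1)%N.
Proof.
move=> hp.
have -> : (N.+1 * N.+1)%N = size [seq gm x | x <- enum {: option 'I_N * option 'I_N}].
  by rewrite size_map -cardE card_prod card_option card_ord.
apply: uniq_leq_size; first exact: msupp_uniq.
move=> m hm; have := msize_mdeg_lt hm => hlt.
have [ab ->] := mdeg_small (leq_trans hlt hp).
by apply: map_f; rewrite mem_enum.
Qed.
End Count.

Lemma msz n (s : seq (poly_t n)) : pcr_degree_le 2 s ->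
  (monomial_size s <= size s * (#|var_t n|.+1 * #|var_t n|.+1))%N.
Proof.
elim: s => [|p s IH]; rewrite /pcr_degree_le /=; first by rewrite /monomial_size big_nil.
move=> /andP [hp hs].
rewrite /monomial_size big_cons mulSn leq_add //; first exact: msupp_small.
exact: IH.
Qed.

Lemma card_var n : #|var_t n| = (n * (2 * n) * 2)%N.
Proof. by rewrite /var_t !card_prod !card_ord card_bool. Qed.

Lemma ar1 n : (0 < n)%N -> (1 + n.-1 * (4 * n + 4) + 4 * n + 2 + 2 <= 9 * n ^ 2)%N.
Proof. case: n => [|m] //= _; nia. Qed.

Lemma ar2 n : (0 < n)%N -> ((n * (2 * n) * 2).+1 * (n * (2 * n) * 2).+1 <= 25 * n ^ 4)%N.
Proof. case: n => [|m] //= _; nia. Qed.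

Theorem lemma5 :
  exists c k : nat, forall n : nat, (0 < n)%N ->
    exists s : seq (poly_t n),
      pcr_refutation s /\ pcr_degree_le 2 s /\ (monomial_size s <= c * n ^ k)%N.
Proof.
exists 225%N, 6%N => n n0.
have hn1 : (n.-1 < n)%N by rewrite ltn_predL.
have [s [vs [sz [i [hi Li]]]]] := @loop n n.-1 hn1.
have [s2 [e2 [sz2 h2]]] := halfstep vs Li.
set c := cc n.-1 in h2.
set K := ks i ^+ 2.
have mK : (msize K <= 3)%N by rewrite /K expr2 msize_mul2 ?msize_ks.
have e3 : Ext s2 (rcons s2 K).
  apply: ext_rcons => //; first by case: e2.
  by left; right; right; exists i; rewrite hi.
set G := ks i ^+ 2 - (c ^+ 2)%:MP in h2.
set One := (c ^+ 2)^-1 *: K + (- (c ^+ 2)^-1) *: G.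
have e4 : Ext (rcons s2 K) (rcons (rcons s2 K) One).
  apply: ext_rcons; first by case: e3.
    right; right; right; exists K, G, (c ^+ 2)^-1, (- (c ^+ 2)^-1); split; first exact: in_rcons.
    by split => //; apply: (proj2 e3).
  by apply: msize_comb => //; apply: (valid_msize (proj1 e2)).
have One1 : One = 1.
  rewrite /One /G /K scaleNr -scalerBr.
  have -> : ks i ^+ 2 - (ks i ^+ 2 - (c ^+ 2)%:MP) = (c ^+ 2)%:MP by ring.
  by rewrite -mul_mpolyC -mpolyCM mulVf ?mpolyC1 // expf_neq0 // cc_neq0.
have [[pf dg] _] := e4.
exists (rcons (rcons s2 K) One); split; last split => //.
  split => //; split; first by rewrite -size_eq0 size_rcons.
  by rewrite last_rcons One1.
apply: leq_trans (msz dg) _.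
rewrite card_var !size_rcons.
have hs : (size s2 <= 1 + n.-1 * (4 * n + 4) + 4 * n + 2)%N by apply: leq_trans sz2 _; rewrite !leq_add2r.
have : ((size s2).+2 <= 9 * n ^ 2)%N.
  apply: leq_trans (_ : 1 + n.-1 * (4 * n + 4) + 4 * n + 2 + 2 <= _)%N; first by rewrite -addn2 leq_add2r.
  exact: ar1.
move=> h; apply: leq_trans (leq_mul h (leqnn _)) _.
rewrite (_ : 225 * n ^ 6 = 9 * n ^ 2 * (25 * n ^ 4))%N; last by rewrite (_ : 6 = 2 + 4)%N // expnD; ring.
by apply: leq_mul => //; apply: ar2.
Qed.
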